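(* Let $C$ be a linear code over $\mathbb{F}_q$ of dimension $k$ with weight hierarchy $(d_1,\dots,d_k)$. Assume that there exists an integer $\alpha$ such that \[ d_i = \alpha\,\frac{q^i-1}{q^{i-1}(q-1)} \quad \text{for all } 1\leqslant i\leqslant k. \] Then $C$ is a constant weight code, and all its non-zero codewords have weight $\alpha$.
   Context: For a subcode $D \subseteq C \subseteq \mathbb{F}_q^n$ (a linear subspace), $\mathrm{Supp}(D)=\{x\in\{1,\dots,n\} : \exists d\in D,\ d_x\neq 0\}$ and $w(D)=\#\mathrm{Supp}(D)$; the weight of a codeword is the weight of the subcode it spans. For $1\leqslant r\leqslant k$, $d_r=\min\{w(D) : D\subseteq C \text{ a subcode of dimension } r\}$, and $(d_1,\dots,d_k)$ is the weight hierarchy. A constant weight code is a code all of whose non-zero codewords have the same weight. *)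

(* Defs.v *)
From HB Require Import structures.
From mathcomp Require Import all_boot all_order all_algebra all_field.
Set Implicit Arguments. Unset Strict Implicit. Unset Printing Implicit Defensive.
Import GRing.Theory.
Local Open Scope ring_scope.

Definition supp (F : finFieldType) (n : nat) (D : {vspace 'rV[F]_n}) : {set 'I_n} :=
  [set x : 'I_n | [exists d : 'rV[F]_n, (d \in D) && (d 0 x != 0)]].

Definition wt (F : finFieldType) (n : nat) (D : {vspace 'rV[F]_n}) : nat :=
  #|supp D|.

Definition cwt (F : finFieldType) (n : nat) (c : 'rV[F]_n) : nat := wt <[c]>%VS.

Definition is_gen_weight (F : finFieldType) (n : nat) (C : {vspace 'rV[F]_n})
    (r d : nat) : Prop :=
  (exists2 D : {vspace 'rV[F]_n}, ((D <= C)%VS && (\dim D == r)) & wt D = d) /\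
  (forall D : {vspace 'rV[F]_n}, (D <= C)%VS -> \dim D = r -> (d <= wt D)%N).

Definition constant_weight (F : finFieldType) (n : nat) (C : {vspace 'rV[F]_n}) : Prop :=
  forall c c' : 'rV[F]_n, c \in C -> c' \in C -> c != 0 -> c' != 0 -> cwt c = cwt c'.

(* Main.v *)
Require Import Defs.
From HB Require Import structures.
From mathcomp Require Import all_boot all_order all_algebra all_field.
Import GRing.Theory Num.Theory.
Local Open Scope ring_scope.

Lemma mul_dd (F : finFieldType) n (v : 'rV[F]_n) (x : 'I_n) :
  v *m delta_mx x x = v 0 x *: delta_mx 0 x.
Proof.
apply/rowP=> j; rewrite !mxE (bigD1 x) //= big1 ?addr0.
  by rewrite !mxE eqxx.
by move=> k /negbTE kx; rewrite !mxE kx mulr0.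
Qed.

Lemma count_x (F : finFieldType) n (C : {vspace 'rV[F]_n}) (x : 'I_n) :
  x \in supp C ->
  #|[pred c in C | c 0 x != 0]| = (#|F| ^ \dim C - #|F| ^ (\dim C).-1)%N.
Proof.
rewrite inE => /existsP [c0 /andP [c0C c0x]].
pose f : 'End('rV[F]_n) := linfun (mulmxr (delta_mx x x : 'M[F]_n)).
have fE (v : 'rV[F]_n) : f v = v 0 x *: delta_mx 0 x by rewrite lfunE /= mul_dd.
have dimI : \dim (f @: C)%VS = 1%N.
  apply/eqP; rewrite eqn_leq; apply/andP; split.
    apply: (@leq_trans (\dim <[(delta_mx 0 x : 'rV[F]_n)%R]>%VS)); last by rewrite dim_vline leq_b1.
    apply: dimvS; apply/subvP => w /memv_imgP [u _ ->].
    by rewrite fE; apply/vlineP; exists (u 0 x).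
  rewrite lt0n dimv_eq0; apply/eqP => h.
  have : f c0 \in (f @: C)%VS by apply: memv_img.
  rewrite h memv0 fE scaler_eq0 (negbTE c0x) /=.
  by apply/negP; apply/eqP => /matrixP /(_ 0 x); rewrite !mxE !eqxx /= => /eqP; rewrite oner_eq0.
have dimK := limg_ker_dim f C.
rewrite dimI addn1 in dimK.
have cK : #|[predI C & [pred c : 'rV[F]_n | c 0 x == 0]]| = (#|F| ^ (\dim C).-1)%N.
  rewrite -dimK -card_vspace; apply: eq_card => v.
  rewrite !inE memv_cap memv_ker fE scaler_eq0.
  have -> : (delta_mx 0 x == 0 :> 'rV[F]_n) = false.
    by apply/negP => /eqP /matrixP /(_ 0 x); rewrite !mxE !eqxx /= => /eqP; rewrite oner_eq0.
  by rewrite orbF.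
have := cardID [pred c : 'rV[F]_n | c 0 x == 0] C.
rewrite cK card_vspace => <-; rewrite addKn; apply: eq_card => v.
by rewrite !inE andbC.
Qed.

Lemma cwtE (F : finFieldType) n (c : 'rV[F]_n) : cwt c = #|[pred x | c 0 x != 0]|.
Proof.
rewrite /cwt /wt; apply: eq_card => x; rewrite /supp !inE.
apply/existsP/idP => [[d /andP [/vlineP [a ->] h]] | h].
  by move: h; rewrite mxE mulf_eq0 negb_or => /andP [].
by exists c; rewrite memv_line h.
Qed.

Lemma sum_cwt (F : finFieldType) n (C : {vspace 'rV[F]_n}) :
  (\sum_(c in C) cwt c = wt C * (#|F| ^ \dim C - #|F| ^ (\dim C).-1))%N.
Proof.
under eq_bigr => c _ do rewrite cwtE -sum1_card big_mkcond /=.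
rewrite exchange_big /=.
rewrite /wt -sum_nat_const [RHS]big_mkcond /=.
apply: eq_bigr => x _.
rewrite -big_mkcondr /= sum1_card.
case: ifP => hx; first by rewrite -(@count_x F n C x hx); apply: eq_card => v; rewrite !inE.
apply/eq_card0 => v; rewrite !inE.
apply/negP => /andP [vC vx]; move/negP: hx; apply; rewrite inE.
by apply/existsP; exists v; rewrite vC.
Qed.

Theorem corollary2 (F : finFieldType) (n : nat) (C : {vspace 'rV[F]_n})
    (d : nat -> nat) (alpha : int) :
  let q := #|F| in
  let k := \dim C in
  (forall i : nat, (1 <= i <= k)%N -> is_gen_weight C i (d i)) ->
  (forall i : nat, (1 <= i <= k)%N ->
     (d i)%:R = alpha%:~R * ((q ^ i)%:R - 1) / ((q ^ i.-1)%:R * (q%:R - 1)) :> rat) ->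
  constant_weight C /\
  (forall c : 'rV[F]_n, c \in C -> c != 0 -> (cwt c)%:Z = alpha).
Proof.
move=> q k hgw hd.
have q2 : (1 < q)%N by exact: finNzRing_gt1.
suff key : forall c, c \in C -> c != 0 -> cwt c = d 1%N /\ alpha = (d 1%N)%:Z.
  split; last by move=> c cC c0; have [-> ->] := key c cC c0.
  by move=> c c' cC c'C c0 c'0; rewrite (key c cC c0).1 (key c' c'C c'0).1.
move=> c0 c0C c00.
have k1 : (1 <= k)%N.
  have <- : \dim <[c0]>%VS = 1%N by rewrite dim_vline c00.
  by apply: dimvS; rewrite -memvE.
have h1 : (1 <= 1 <= k)%N by rewrite leqnn k1.
have hk : (1 <= k <= k)%N by rewrite leqnn k1.
have q10 : (q%:R - 1 : rat) != 0.
  by rewrite subr_eq0 (eqr_nat rat q 1) neq_ltn q2 orbT.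
have ha : alpha = (d 1%N)%:Z.
  have := hd 1%N h1; rewrite expn1 expn0 mul1r mulfK //.
  by move=> h; apply/(@intr_inj rat); rewrite -h.
split; last by [].
have hdk : d k = wt C.
  have [[D /andP [DC /eqP Dk] <-] _] := hgw k hk .
  suff -> : D = C by [].
  by apply/eqP; rewrite eqEdim DC Dk /=.
have hmin : forall c, c \in C -> c != 0 -> (d 1%N <= cwt c)%N.
  move=> c cC cn; have [_ m] := hgw 1%N h1.
  by apply: m; [rewrite -memvE | rewrite dim_vline cn].
have qk : (q ^ k.-1 <= q ^ k)%N by rewrite leq_exp2l // leq_pred.
have qk1 : (1 <= q ^ k)%N by rewrite expn_gt0 ltnW.
have eqn : (wt C * (q ^ k - q ^ k.-1) = d 1%N * (q ^ k - 1))%N.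
  apply/eqP; rewrite -(eqr_nat rat) !natrM !natrB // -hdk.
  have := hd k hk.
  rewrite ha => ->.
  have -> : ((q ^ k)%:R - (q ^ k.-1)%:R : rat) = (q ^ k.-1)%:R * (q%:R - 1).
    by rewrite mulrBr mulr1 -natrM -expnSr prednK.
  rewrite mulfVK; first by [].
  by rewrite mulf_neq0 // pnatr_eq0 -lt0n expn_gt0 ltnW.
have S := @sum_cwt F n C.
rewrite -/k -/q eqn (bigD1 0) ?mem0v //= in S.
have cw0 : cwt (0 : 'rV[F]_n) = 0%N.
  by rewrite cwtE; apply: eq_card0 => x; rewrite !inE mxE eqxx.
have cardP : #|[pred c | (c \in C) && (c != 0)]| = (q ^ k - 1)%N.
  rewrite -card_vspace -/k [in RHS](cardD1 0) mem0v add1n subSS subn0.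
  by apply: eq_card => v; rewrite !inE andbC.
pose P := fun c : 'rV[F]_n => (c \in C) && (c != 0).
have L := @leqif_sum _ P (fun c => d 1%N == cwt c) (fun _ => d 1%N) (@cwt F n)
   (fun c hc => leqif_eq (hmin c (andP hc).1 (andP hc).2)).
have E : (\sum_(c | P c) d 1%N = \sum_(c | P c) cwt c)%N.
  rewrite cw0 add0n in S; rewrite /P S sum_nat_const mulnC -cardP.
  by congr (_ * _)%N; apply: eq_card => v.
move: L => [_]; rewrite E eqxx => /esym /forallP /(_ c0).
rewrite /P c0C c00 /= => /eqP h; exact: esym h.
Qed.
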